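(* Let $\{R_i\}_{i}$ be a family of commutative rings. Then the direct product $\prod_i R_i$ is locally stable if and only if each $R_i$ is locally stable.
   Context: All rings are commutative with identity. A ring $S$ has stable range 1 if whenever $aS+bS=S$ there is $y\in S$ with $a+by$ a unit. $S$ is locally stable if whenever $a,b\in S$ with $aS+bS=S$ there is $y\in S$ such that $S/(a+by)S$ has stable range 1. *)

(* Defs.v *)
From HB Require Import structures.
From mathcomp Require Import all_boot all_order all_algebra.
From mathcomp Require Import boolp.
Set Implicit Arguments. Unset Strict Implicit. Unset Printing Implicit Defensive.
Import GRing.Theory.
Local Open Scope ring_scope.

(* Rings are commutative with identity; the zero ring is allowed
   (comPzRingType), since quotients S/cS and empty products may be zero. *)

Definition is_unit (S : comPzRingType) (x : S) : Prop := exists u : S, x * u = 1.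

Definition comax (S : comPzRingType) (a b : S) : Prop :=
  exists x z : S, a * x + b * z = 1.

Definition stable_range1 (S : comPzRingType) : Prop :=
  forall a b : S, comax a b -> exists y : S, is_unit (a + b * y).

(* S/cS has stable range 1, written out on representatives in S:
   the class of t is a unit in S/cS iff t*u = 1 + c*w for some u, w;
   (a mod c)(S/cS) + (b mod c)(S/cS) = S/cS iff a*x + b*z = 1 + c*w. *)
Definition quot_stable_range1 (S : comPzRingType) (c : S) : Prop :=
  forall a b : S,
    (exists x z w : S, a * x + b * z = 1 + c * w) ->
    exists y u w : S, (a + b * y) * u = 1 + c * w.

Definition locally_stable (S : comPzRingType) : Prop :=
  forall a b : S, comax a b -> exists y : S, quot_stable_range1 (a + b * y).

Definition dprod_ring (I : Type) (R : I -> comPzRingType) := forall i, R i.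

Section DProd.
Variables (I : Type) (R : I -> comPzRingType).
Local Notation P := (dprod_ring R).

HB.instance Definition _ := gen_eqMixin P.
HB.instance Definition _ := gen_choiceMixin P.

Definition dp_zero : P := fun i => 0.
Definition dp_opp (f : P) : P := fun i => - f i.
Definition dp_add (f g : P) : P := fun i => f i + g i.
Definition dp_one : P := fun i => 1.
Definition dp_mul (f g : P) : P := fun i => f i * g i.

Lemma dp_addA : associative dp_add.
Proof. by move=> f g h; apply: functional_extensionality_dep => i; rewrite /dp_add addrA. Qed.
Lemma dp_addC : commutative dp_add.
Proof. by move=> f g; apply: functional_extensionality_dep => i; rewrite /dp_add addrC. Qed.
Lemma dp_add0 : left_id dp_zero dp_add.
Proof. by move=> f; apply: functional_extensionality_dep => i; rewrite /dp_add add0r. Qed.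
Lemma dp_addN : left_inverse dp_zero dp_opp dp_add.
Proof. by move=> f; apply: functional_extensionality_dep => i; rewrite /dp_add addNr. Qed.

HB.instance Definition _ := GRing.isZmodule.Build P dp_addA dp_addC dp_add0 dp_addN.

Lemma dp_mulA : associative dp_mul.
Proof. by move=> f g h; apply: functional_extensionality_dep => i; rewrite /dp_mul mulrA. Qed.
Lemma dp_mulC : commutative dp_mul.
Proof. by move=> f g; apply: functional_extensionality_dep => i; rewrite /dp_mul mulrC. Qed.
Lemma dp_mul1 : left_id dp_one dp_mul.
Proof. by move=> f; apply: functional_extensionality_dep => i; rewrite /dp_mul mul1r. Qed.
Lemma dp_mulDl : left_distributive dp_mul (@GRing.add P).
Proof. by move=> f g h; apply: functional_extensionality_dep => i; rewrite /dp_mul /= /dp_add mulrDl. Qed.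

HB.instance Definition _ := GRing.Zmodule_isComPzRing.Build P dp_mulA dp_mulC dp_mul1 dp_mulDl.
End DProd.

(* Main.v *)
Require Import Defs.
From mathcomp Require Import all_boot all_order all_algebra.
From mathcomp Require Import boolp.
Import GRing.Theory.
Local Open Scope ring_scope.

Section H.
Variables (I : Type) (R : I -> comPzRingType).
Local Notation P := (dprod_ring R).

Lemma evM (f g : P) i : (f * g) i = f i * g i. Proof. by []. Qed.
Lemma evD (f g : P) i : (f + g) i = f i + g i. Proof. by []. Qed.
Lemma ev1 i : (1 : P) i = 1. Proof. by []. Qed.
Lemma extP (f g : P) : (forall i, f i = g i) -> f = g.
Proof. move=> h; exact: functional_extensionality_dep. Qed.

Definition inj (i : I) (a : R i) (d : P) : P := fun j =>
  match pselect (i = j) with left e => eq_rect i R a j e | right _ => d j end.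

Lemma inj_at i a d : inj i a d i = a.
Proof.
rewrite /inj; case: pselect => [e|] //.
by rewrite (Prop_irrelevance e erefl).
Qed.
Lemma inj_off i a d j : i <> j -> inj i a d j = d j.
Proof. by rewrite /inj; case: pselect. Qed.

Lemma choiceT (A : Type) (Q : A -> Prop) : (exists x, Q x) -> {x | Q x}.
Proof. exact: constructive_indefinite_description. Qed.
End H.
Arguments inj {I R} i a d.
Arguments choiceT {A Q}.

Theorem proposition2p7 (I : Type) (R : I -> comPzRingType) :
  locally_stable (dprod_ring R) <-> (forall i : I, locally_stable (R i)).
Proof.
split.
- move=> H i a b [x [z hab]].
  have [|Y HY] := H (inj i a 1) (inj i b 0).
    exists (inj i x 1), (inj i z 0); apply: extP => j.
    rewrite !(evM, evD, ev1).
    case: (pselect (i = j)) => [<-|n]; first by rewrite !inj_at.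
    by rewrite !inj_off // mulr1 mul0r addr0.
  exists (Y i) => a' b' [x' [z' [w' h']]].
  have [|Y' [U [W hU]]] := HY (inj i a' 1) (inj i b' 0).
    exists (inj i x' 1), (inj i z' 0), (inj i w' 0); apply: extP => j.
    rewrite !(evM, evD, ev1).
    case: (pselect (i = j)) => [<-|n]; first by rewrite !inj_at.
    by rewrite !inj_off // mulr1 !mul0r !mulr0 !addr0.
  exists (Y' i), (U i), (W i).
  by have := congr1 (fun f => f i) hU; rewrite /= !(evM, evD, ev1) !inj_at.
- move=> H A B [X [Z hab]].
  have hy : forall i, exists y, quot_stable_range1 (A i + B i * y).
    move=> i; apply: H; exists (X i), (Z i).
    by have := congr1 (fun f => f i) hab; rewrite /= !(evM, evD, ev1).
  exists (fun i => sval (choiceT (hy i))) => A' B' [X' [Z' [W' h']]].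
  have hq : forall i, exists y u w, (A' i + B' i * y) * u =
      1 + (A i + B i * sval (choiceT (hy i))) * w.
    move=> i; apply: (svalP (choiceT (hy i))).
    exists (X' i), (Z' i), (W' i).
    by have := congr1 (fun f => f i) h'; rewrite /= !(evM, evD, ev1).
  pose y i := sval (choiceT (hq i)).
  pose u i := sval (choiceT (svalP (choiceT (hq i)))).
  pose w i := sval (choiceT (svalP (choiceT (svalP (choiceT (hq i)))))).
  exists (y : dprod_ring R), (u : dprod_ring R), (w : dprod_ring R).
  apply: extP => i; rewrite !(evM, evD, ev1).
  exact: (svalP (choiceT (svalP (choiceT (svalP (choiceT (hq i))))))).
Qed.
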